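(* Let $\tau\in[0,1]$ and suppose the decision tree $T$ is everywhere $\tau$-influential with respect to $f:\{0,1\}^n\to\{0,1\}$. Then for every $i\in[n]$, $\mathrm{Inf}_i[f]\ge\tau\cdot\delta_i(T)$.
   Context: $\mathrm{Inf}_i[g]=\Pr_{x\sim\{0,1\}^n}[g(x)\ne g(x^{\oplus i})]$ for uniform $x$. For an internal node $v$ of $T$, $\mathrm{ind}(v)$ is the index of the variable queried at $v$, and $f_v$ is the restriction of $f$ induced by the root-to-$v$ path. $T$ is everywhere $\tau$-influential w.r.t. $f$ if $\mathrm{Inf}_{\mathrm{ind}(v)}[f_v]\ge\tau$ for every internal node $v$. $\delta_i(T)=\Pr_{x\sim\{0,1\}^n}[T\text{ queries }x_i\text{ on input }x]$. *)

(* Defs.v *)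
From mathcomp Require Import all_boot all_order all_algebra.
Set Implicit Arguments. Unset Strict Implicit. Unset Printing Implicit Defensive.
Import Order.TTheory GRing.Theory Num.Theory.
Local Open Scope ring_scope.

(* Points of the Boolean cube {0,1}^n (false = 0, true = 1). *)
Definition cube (n : nat) := {ffun 'I_n -> bool}.

Definition flip n (i : 'I_n) (x : cube n) : cube n :=
  [ffun j => if j == i then ~~ x j else x j].

Definition prob (R : realFieldType) n (A : {set cube n}) : R :=
  #|A|%:R / (2 ^ n)%:R.

Definition Inf (R : realFieldType) n (g : cube n -> bool) (i : 'I_n) : R :=
  prob R [set x : cube n | g x != g (flip i x)].

(* Decision trees over n Boolean variables: a leaf outputs a bit; an internal
   node queries variable i, goes to the first subtree if x_i = 0 and to the
   second if x_i = 1. *)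
Inductive dtree (n : nat) : Type :=
| Leaf : bool -> dtree n
| Node : 'I_n -> dtree n -> dtree n -> dtree n.
Arguments Leaf {n}.

Definition setc n (x : cube n) (i : 'I_n) (b : bool) : cube n :=
  [ffun j => if j == i then b else x j].

(* Restriction of f induced by a root-to-node path (list of (queried variable,
   branch taken)), viewed as a function on {0,1}^n that ignores the fixed
   coordinates. *)
Definition restrict n (f : cube n -> bool) (p : seq ('I_n * bool)) : cube n -> bool :=
  fun x => f (foldl (fun y ib => setc y ib.1 ib.2) x p).

Fixpoint everywhere_infl_from (R : realFieldType) n (f : cube n -> bool) (tau : R)
  (p : seq ('I_n * bool)) (T : dtree n) : Prop :=
  match T with
  | Leaf _ => True
  | Node i l r =>
      tau <= Inf R (restrict f p) i /\
      everywhere_infl_from f tau (rcons p (i, false)) l /\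
      everywhere_infl_from f tau (rcons p (i, true)) r
  end.

Definition everywhere_infl (R : realFieldType) n (T : dtree n) (f : cube n -> bool) (tau : R) :=
  everywhere_infl_from f tau [::] T.

Fixpoint queries n (T : dtree n) (i : 'I_n) (x : cube n) : bool :=
  match T with
  | Leaf _ => false
  | Node j l r => (j == i) || queries (if x j then r else l) i x
  end.

Definition delta (R : realFieldType) n (T : dtree n) (i : 'I_n) : R :=
  prob R [set x : cube n | queries T i x].

(* Main.v *)
Require Import Defs.
From mathcomp Require Import all_boot all_order all_algebra.
From mathcomp Require Import lra.
Set Implicit Arguments. Unset Strict Implicit. Unset Printing Implicit Defensive.
Import Order.TTheory GRing.Theory Num.Theory.
Local Open Scope ring_scope.

Definition Ap n (p : seq ('I_n * bool)) (x : cube n) : cube n :=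
  foldl (fun y ib => setc y ib.1 ib.2) x p.

Lemma Ap_cons n (q : 'I_n * bool) p x : Ap (q :: p) x = Ap p (setc x q.1 q.2).
Proof. by []. Qed.

Lemma Ap_rcons n p (q : 'I_n * bool) x : Ap (rcons p q) x = setc (Ap p x) q.1 q.2.
Proof. by rewrite /Ap foldl_rcons. Qed.

Lemma setcE n (x : cube n) k b j : setc x k b j = if j == k then b else x j.
Proof. by rewrite /setc ffunE. Qed.

Lemma flipE n (x : cube n) k j : flip k x j = if j == k then ~~ x j else x j.
Proof. by rewrite /flip ffunE. Qed.

Lemma setc_setc n (x : cube n) k b c : setc (setc x k b) k c = setc x k c.
Proof. by apply/ffunP=> y; rewrite !setcE; case: eqP. Qed.

Lemma setcC n (x : cube n) k b j c : k != j ->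
  setc (setc x k b) j c = setc (setc x j c) k b.
Proof.
move=> kj; apply/ffunP=> y; rewrite !setcE.
case: (eqVneq y j) => [->|//]; by rewrite eq_sym (negbTE kj).
Qed.

Lemma setc_id n (x : cube n) k : setc x k (x k) = x.
Proof. by apply/ffunP=> y; rewrite !setcE; case: eqP => // ->. Qed.

Lemma setc_flip n (x : cube n) k b : setc (flip k x) k b = setc x k b.
Proof. by apply/ffunP=> y; rewrite !setcE flipE; case: eqP. Qed.

Lemma flip_setc n (x : cube n) i j b : i != j ->
  flip i (setc x j b) = setc (flip i x) j b.
Proof.
move=> ij; apply/ffunP=> y; rewrite !setcE !flipE !setcE.
case: (eqVneq y j) => [->|//]; by rewrite eq_sym (negbTE ij).
Qed.

Lemma flip_flip n (x : cube n) i : flip i (flip i x) = x.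
Proof. by apply/ffunP=> y; rewrite !flipE; case: eqP => // _; rewrite negbK. Qed.

Lemma flipE' n (x : cube n) i : flip i x i = ~~ x i.
Proof. by rewrite flipE eqxx. Qed.

Lemma Ap_notin n p (x : cube n) k : k \notin map fst p -> Ap p x k = x k.
Proof.
elim: p x => [//|q p IH] x; rewrite map_cons in_cons negb_or => /andP[kq kp].
by rewrite Ap_cons IH // setcE (negbTE kq).
Qed.

Lemma Ap_setc n p (x : cube n) k c : k \notin map fst p ->
  Ap p (setc x k c) = setc (Ap p x) k c.
Proof.
elim: p x => [//|q p IH] x; rewrite map_cons in_cons negb_or => /andP[kq kp].
by rewrite !Ap_cons (setcC _ _ _ kq) IH.
Qed.

Lemma Ap_flip_in n p (x : cube n) k : k \in map fst p -> Ap p (flip k x) = Ap p x.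
Proof.
elim: p x => [//|q p IH] x; rewrite map_cons in_cons !Ap_cons.
case: (eqVneq k q.1) => [->|kq] /= H; first by rewrite setc_flip.
rewrite -flip_setc ?IH //.
Qed.

Lemma Apb_setc n p (y : cube n) j b : j \notin map fst p ->
  Ap (rcons p (j, b)) (setc y j b) = Ap (rcons p (j, b)) y.
Proof. by move=> jp; rewrite !Ap_rcons /= Ap_setc // setc_setc. Qed.

Lemma Apb_eq n p (y : cube n) j b : j \notin map fst p -> y j = b ->
  Ap (rcons p (j, b)) y = Ap p y.
Proof. by move=> jp yj; rewrite Ap_rcons /= -yj -(Ap_notin y jp) setc_id. Qed.

Lemma card_split n (j : 'I_n) (P : pred (cube n)) :
  #|[set x | P x]| = (#|[set x : cube n | (x j == true) && P x]| + #|[set x : cube n | (x j == false) && P x]|)%N.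
Proof.
rewrite -(cardsID [set x : cube n | x j == true] [set x | P x]); congr (_ + _)%N;
  apply: eq_card => x; rewrite !inE; case: (x j); rewrite ?andbT ?andbF //= andbC.
Qed.

Lemma card_half n (j : 'I_n) b (P : pred (cube n)) :
  (forall x, P (setc x j b) = P x) ->
  #|[set x | P x]| = (2 * #|[set x : cube n | (x j == b) && P x]|)%N.
Proof.
move=> inv.
have Pf : forall x, P (flip j x) = P x.
  by move=> x; rewrite -inv setc_flip inv.
rewrite -(cardsID [set x : cube n | x j == b] [set x | P x]) mul2n -addnn.
congr (_ + _)%N.
  by apply: eq_card => x; rewrite !inE andbC.
rewrite -(card_preimset _ (can_inj (@flip_flip n ^~ j))).
apply: eq_card => x; rewrite !inE Pf flipE'.
by clear inv Pf; case: (x j); case: b.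
Qed.

Lemma card_cube n : #|{: cube n}| = (2 ^ n)%N.
Proof. by rewrite /cube card_ffun card_bool card_ord. Qed.

Lemma Inf_count (R : realFieldType) n (g : cube n -> bool) i (tau : R) :
  tau <= Inf R g i ->
  tau * (2 ^ n)%:R <= (#|[set x : cube n | g x != g (flip i x)]|)%:R.
Proof.
rewrite /Inf /prob => H.
have hp : 0 < ((2 ^ n)%N)%:R :> R by rewrite ltr0n expn_gt0.
by rewrite -ler_pdivlMr.
Qed.

Lemma main_count (R : realFieldType) n (f : cube n -> bool) (tau : R) (i : 'I_n) :
  0 < tau -> forall T p, everywhere_infl_from f tau p T ->
  tau * (#|[set x : cube n | queries T i (Ap p x)]|)%:R <=
  (#|[set x : cube n | restrict f p x != restrict f p (flip i x)]|)%:R.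
Proof.
move=> tpos; elim=> [b|j l IHl r IHr] p /=.
  move=> _; have -> : [set x : cube n | false] = set0 by apply/setP=> x; rewrite !inE.
  by rewrite cards0 mulr0 ler0n.
move=> [Hj [Hl Hr]].
case: (eqVneq j i) => [eji|nji].
  subst j; apply: le_trans (Inf_count Hj).
  rewrite ler_pM2l // ler_nat -card_cube; exact: max_card.
have jp : j \notin map fst p.
  apply/negP=> jin; move: Hj; rewrite /Inf /prob.
  have -> : [set x : cube n | restrict f p x != restrict f p (flip j x)] = set0.
    by apply/setP=> x; rewrite !inE /restrict -/(Ap p x) -/(Ap p (flip j x)) Ap_flip_in // eqxx.
  by rewrite cards0 mul0r; move/(lt_le_trans tpos); rewrite ltxx.
have HS : forall b : bool,
  #|[set x : cube n | queries (if b then r else l) i (Ap (rcons p (j, b)) x)]| =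
  (2 * #|[set x : cube n | (x j == b) && queries (if Ap p x j then r else l) i (Ap p x)]|)%N.
  move=> b; rewrite (@card_half n j b); last by move=> x; rewrite Apb_setc.
  congr (2 * _)%N; apply: eq_card => x; rewrite !inE /=.
  case: (eqVneq (x j) b) => //= xjb.
  by rewrite Ap_notin // xjb Apb_eq.
have HI : forall b : bool,
  #|[set x : cube n | restrict f (rcons p (j, b)) x != restrict f (rcons p (j, b)) (flip i x)]| =
  (2 * #|[set x : cube n | (x j == b) && (restrict f p x != restrict f p (flip i x))]|)%N.
  move=> b; rewrite (@card_half n j b); last first.
    move=> x; rewrite /restrict -!/(Ap _ _) flip_setc; last by rewrite eq_sym.
    by rewrite !Apb_setc.
  congr (2 * _)%N; apply: eq_card => x; rewrite !inE /=.
  case: (eqVneq (x j) b) => //= xjb.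
  have xjb' : flip i x j = b by rewrite flipE (negbTE nji).
  by rewrite /restrict -!/(Ap _ _) !Apb_eq.
change (tau * (#|[set x : cube n | queries (if Ap p x j then r else l) i (Ap p x)]|)%:R <=
  (#|[set x : cube n | restrict f p x != restrict f p (flip i x)]|)%:R).
rewrite (card_split j (fun x => queries (if Ap p x j then r else l) i (Ap p x))).
rewrite (card_split j (fun x => restrict f p x != restrict f p (flip i x))).
have h1 := IHl _ Hl; have h2 := IHr _ Hr.
rewrite (HS false) (HI false) in h1; rewrite (HS true) (HI true) in h2.
move: h1 h2; rewrite !natrD !addr0 => h1 h2.
nra.
Qed.

Theorem mainTheorem9 (R : realFieldType) (n : nat) (tau : R)
  (f : cube n -> bool) (T : dtree n) :
  0 <= tau -> tau <= 1 ->
  everywhere_infl T f tau ->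
  forall i : 'I_n, tau * delta R T i <= Inf R f i.
Proof.
move=> t0 t1 H i.
have Inf0 : 0 <= Inf R f i by rewrite /Inf /prob divr_ge0 // ler0n.
case: (eqVneq tau 0) => [->|tn0]; first by rewrite mul0r.
have tpos : 0 < tau by rewrite lt_def tn0 t0.
have := @main_count R n f tau i tpos T [::] H.
rewrite /delta /Inf /prob mulrA => h.
apply: ler_wpM2r; first by rewrite invr_ge0 ler0n.
exact: h.
Qed.
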